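(* For every Tychonoff space $X$, the following are equivalent: (1) $C_p(X)\models S_1(\Gamma_f,\Omega_f)$ for every $f\in C_p(X)$; (2) $X\models S_1(\Gamma_F,\Omega)$.
   Context: All spaces are Tychonoff; $C_p(X)$ is $C(X)$ with pointwise convergence topology. For $y$ in a space $Y$: $\Omega_y=\{A\subseteq Y: y\in\overline A\setminus A\}$, $\Gamma_y=\{A\subseteq Y: A$ infinite, $y\notin A$, every neighbourhood of $y$ contains all but finitely many points of $A\}$. A zero-set is $g^{-1}(0)$ for some $g\in C(X)$; a cozero-set is the complement of a zero-set. A cover $\mathcal U$ of $X$ always means $X=\bigcup\mathcal U$, $X\notin\mathcal U$. $\Omega$: open $\omega$-covers (every finite subset of $X$ lies in some member). A $\gamma$-cover is an infinite cover such that each point lies in all but finitely many members. $\Gamma_F$ is the family of $\gamma$-covers $\mathcal U$ of $X$ by cozero-sets that are $\gamma_F$-shrinkable: there exist zero-sets $F(U)\subseteq U$ ($U\in\mathcal U$) such that $\{F(U):U\in\mathcal U\}$ is a $\gamma$-cover of $X$. $S_1(\mathcal A,\mathcal B)$: for every sequence $(A_n)$ from $\mathcal A$ there are $b_n\in A_n$ with $\{b_n:n\in\omega\}\in\mathcal B$. *)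

(* Defs.v *)
From Stdlib Require Export Reals List.
Open Scope R_scope.

Definition is_topology {X : Type} (T : (X -> Prop) -> Prop) : Prop :=
  T (fun _ => True) /\
  (forall U V, T U -> T V -> T (fun x => U x /\ V x)) /\
  (forall F : (X -> Prop) -> Prop, (forall U, F U -> T U) ->
     T (fun x => exists U, F U /\ U x)).

Definition nbhd {Y : Type} (T : (Y -> Prop) -> Prop) (y : Y) (N : Y -> Prop) : Prop :=
  exists U, T U /\ U y /\ (forall z, U z -> N z).

Definition in_closure {Y : Type} (T : (Y -> Prop) -> Prop) (A : Y -> Prop) (y : Y) : Prop :=
  forall N, nbhd T y N -> exists a, A a /\ N a.

Definition R_open (V : R -> Prop) : Prop :=
  forall y, V y -> exists eps, eps > 0 /\ forall z, Rabs (z - y) < eps -> V z.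

Definition continuous {X : Type} (T : (X -> Prop) -> Prop) (f : X -> R) : Prop :=
  forall V, R_open V -> T (fun x => V (f x)).

Definition tychonoff {X : Type} (T : (X -> Prop) -> Prop) : Prop :=
  (forall x y : X, x <> y -> exists U, T U /\ U x /\ ~ U y) /\
  (forall (C : X -> Prop) (x : X), T (fun z => ~ C z) -> ~ C x ->
     exists f, continuous T f /\ (forall z, 0 <= f z <= 1) /\ f x = 0 /\
               (forall z, C z -> f z = 1)).

Definition CX {X : Type} (T : (X -> Prop) -> Prop) : Type :=
  { f : X -> R | continuous T f }.

Definition Cp_open {X : Type} (T : (X -> Prop) -> Prop) (W : CX T -> Prop) : Prop :=
  forall g, W g -> exists (F : list X) (eps : R), eps > 0 /\
    forall h : CX T, (forall x, In x F -> Rabs (proj1_sig h x - proj1_sig g x) < eps) -> W h.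

Definition infinite {Y : Type} (A : Y -> Prop) : Prop :=
  ~ exists L : list Y, forall a, A a -> In a L.

Definition Omega_at {Y : Type} (T : (Y -> Prop) -> Prop) (y : Y) (A : Y -> Prop) : Prop :=
  in_closure T A y /\ ~ A y.

Definition Gamma_at {Y : Type} (T : (Y -> Prop) -> Prop) (y : Y) (A : Y -> Prop) : Prop :=
  infinite A /\ ~ A y /\
  forall N, nbhd T y N -> exists L : list Y, forall a, A a -> ~ N a -> In a L.

Definition zero_set {X : Type} (T : (X -> Prop) -> Prop) (Z : X -> Prop) : Prop :=
  exists g, continuous T g /\ forall x, Z x <-> g x = 0.
Definition cozero_set {X : Type} (T : (X -> Prop) -> Prop) (U : X -> Prop) : Prop :=
  exists g, continuous T g /\ forall x, U x <-> g x <> 0.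

Definition is_cover {X : Type} (U : (X -> Prop) -> Prop) : Prop :=
  (forall x, exists V, U V /\ V x) /\ ~ (exists V, U V /\ forall x, V x).

Definition omega_cover {X : Type} (T : (X -> Prop) -> Prop) (U : (X -> Prop) -> Prop) : Prop :=
  is_cover U /\ (forall V, U V -> T V) /\
  (forall F : list X, exists V, U V /\ forall x, In x F -> V x).

Definition gamma_cover {X : Type} (U : (X -> Prop) -> Prop) : Prop :=
  is_cover U /\ infinite U /\
  (forall x, exists L : list (X -> Prop), forall V, U V -> ~ V x -> In V L).

Definition GammaF {X : Type} (T : (X -> Prop) -> Prop) (U : (X -> Prop) -> Prop) : Prop :=
  gamma_cover U /\ (forall V, U V -> cozero_set T V) /\
  exists F : (X -> Prop) -> (X -> Prop),
    (forall V, U V -> zero_set T (F V) /\ forall x, F V x -> V x) /\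
    gamma_cover (fun W => exists V, U V /\ W = F V).

Definition S1 {E : Type} (A B : (E -> Prop) -> Prop) : Prop :=
  forall An : nat -> (E -> Prop), (forall n, A (An n)) ->
    exists b : nat -> E, (forall n, An n (b n)) /\ B (fun e => exists n, e = b n).

(* Main.v *)
Require Import Defs.
From Stdlib Require Import Reals Lra Lia List Classical ClassicalEpsilon FunctionalExtensionality PropExtensionality.
Open Scope R_scope.

Lemma set_ext {A : Type} (P Q : A -> Prop) : (forall x, P x <-> Q x) -> P = Q.
Proof. intro H; apply functional_extensionality; intro x; apply propositional_extensionality; apply H. Qed.

Definition pick {A : Type} (d : A) (P : A -> Prop) : A := epsilon (inhabits d) P.
Lemma pick_spec {A : Type} (d : A) (P : A -> Prop) : (exists x, P x) -> P (pick d P).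
Proof. apply epsilon_spec. Qed.

Lemma ball_open (c d : R) : R_open (fun t => Rabs (t - c) < d).
Proof.
  intros y Hy. exists (d - Rabs (y - c)). split; [lra|].
  intros z Hz.
  assert (Rabs (z - c) <= Rabs (z - y) + Rabs (y - c)).
  { replace (z - c) with ((z - y) + (y - c)) by ring. apply Rabs_triang. }
  lra.
Qed.

Lemma cont_comp2 {X : Type} (T : (X -> Prop) -> Prop) (HT : is_topology T)
  (f g : X -> R) (Phi : R -> R -> R) :
  continuous T f -> continuous T g ->
  (forall x eps, eps > 0 -> exists delta, delta > 0 /\ forall a b,
     Rabs (a - f x) < delta -> Rabs (b - g x) < delta ->
     Rabs (Phi a b - Phi (f x) (g x)) < eps) ->
  continuous T (fun x => Phi (f x) (g x)).
Proof.
  intros Hf Hg HP V HV.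
  destruct HT as [HT1 [HT2 HT3]].
  set (Fm := fun W : X -> Prop => T W /\ forall y, W y -> V (Phi (f y) (g y))).
  assert (E : (fun x => V (Phi (f x) (g x))) = (fun x => exists U, Fm U /\ U x)).
  { apply set_ext; intro x; split.
    - intro Hx. destruct (HV _ Hx) as [eps [Heps Hball]].
      destruct (HP x eps Heps) as [d [Hd Hd']].
      exists (fun y => Rabs (f y - f x) < d /\ Rabs (g y - g x) < d). split.
      + split.
        * apply HT2; [apply (Hf _ (ball_open (f x) d)) | apply (Hg _ (ball_open (g x) d))].
        * intros y [H1 H2]. apply Hball. apply Hd'; assumption.
      + rewrite !Rminus_diag, Rabs_R0. lra.
    - intros [U [[_ HU] HUx]]. apply HU; exact HUx. }
  rewrite E. apply HT3. intros U [HU _]; exact HU.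
Qed.

Lemma cont_const {X : Type} (T : (X -> Prop) -> Prop) (HT : is_topology T) (c : R) :
  continuous T (fun _ => c).
Proof.
  destruct HT as [HT1 [HT2 HT3]]. intros V HV. destruct (classic (V c)) as [H|H].
  - replace (fun _ : X => V c) with (fun _ : X => True); auto. apply set_ext; tauto.
  - replace (fun _ : X => V c) with (fun x : X => exists U, (fun _ : X -> Prop => False) U /\ U x).
    + apply HT3. tauto.
    + apply set_ext. intro x; split; [intros [U [[] _]] | tauto].
Qed.

Lemma Rmax0_lip s t : Rabs (Rmax 0 s - Rmax 0 t) <= Rabs (s - t).
Proof. unfold Rmax; destruct (Rle_dec 0 s), (Rle_dec 0 t); unfold Rabs; repeat destruct Rcase_abs; lra. Qed.

Lemma cont_lip {X : Type} (T : (X -> Prop) -> Prop) (HT : is_topology T)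
  (f g : X -> R) (Phi : R -> R -> R) :
  continuous T f -> continuous T g ->
  (forall a b a0 b0, Rabs (Phi a b - Phi a0 b0) <= Rabs (a - a0) + Rabs (b - b0)) ->
  continuous T (fun x => Phi (f x) (g x)).
Proof.
  intros Hf Hg HL. apply cont_comp2; auto.
  intros x eps He. exists (eps / 2). split; [lra|]. intros a b Ha Hb.
  specialize (HL a b (f x) (g x)). lra.
Qed.

Lemma lip1 c a b a0 b0 : Rabs (Rmax 0 (c - Rabs (a - b)) - Rmax 0 (c - Rabs (a0 - b0))) <= Rabs (a - a0) + Rabs (b - b0).
Proof.
  eapply Rle_trans; [apply Rmax0_lip|].
  replace (c - Rabs (a - b) - (c - Rabs (a0 - b0))) with (- (Rabs (a - b) - Rabs (a0 - b0))) by ring.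
  rewrite Rabs_Ropp. eapply Rle_trans; [apply Rabs_triang_inv2|].
  replace (a - b - (a0 - b0)) with ((a - a0) + - (b - b0)) by ring.
  eapply Rle_trans; [apply Rabs_triang|]. rewrite Rabs_Ropp. lra.
Qed.

Lemma lip2 c a b a0 b0 : Rabs (Rmax 0 (Rabs (a - b) - c) - Rmax 0 (Rabs (a0 - b0) - c)) <= Rabs (a - a0) + Rabs (b - b0).
Proof.
  eapply Rle_trans; [apply Rmax0_lip|].
  replace (Rabs (a - b) - c - (Rabs (a0 - b0) - c)) with (Rabs (a - b) - Rabs (a0 - b0)) by ring.
  eapply Rle_trans; [apply Rabs_triang_inv2|].
  replace (a - b - (a0 - b0)) with ((a - a0) + - (b - b0)) by ring.
  eapply Rle_trans; [apply Rabs_triang|]. rewrite Rabs_Ropp. lra.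
Qed.

Lemma div_ed a0 b0 eps : Rabs a0 + Rabs b0 > 0 -> eps > 0 -> exists d, d > 0 /\ forall a b,
  Rabs (a - a0) < d -> Rabs (b - b0) < d ->
  Rabs (Rabs a / (Rabs a + Rabs b) - Rabs a0 / (Rabs a0 + Rabs b0)) < eps.
Proof.
  intros Hp He. set (p0 := Rabs a0 + Rabs b0).
  assert (Hp2 : eps * p0 / 8 > 0) by (assert (0 < eps * p0) by (apply Rmult_lt_0_compat; unfold p0; lra); lra).
  exists (Rmin (p0/4) (eps*p0/8)). split. { apply Rmin_pos; unfold p0 in *; lra. }
  intros a b Ha Hb.
  pose proof (Rmin_l (p0/4) (eps*p0/8)) as Hd1. pose proof (Rmin_r (p0/4) (eps*p0/8)) as Hd2.
  set (d := Rmin (p0/4) (eps*p0/8)) in *.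
  pose proof (Rabs_triang_inv2 a a0) as Hu. pose proof (Rabs_triang_inv2 b b0) as Hv.
  pose proof (Rabs_pos a). pose proof (Rabs_pos b). pose proof (Rabs_pos a0). pose proof (Rabs_pos b0).
  unfold p0 in *.
  set (u := Rabs a) in *. set (v := Rabs b) in *. set (u0 := Rabs a0) in *. set (v0 := Rabs b0) in *.
  assert (Hu3 : Rabs (u - u0) < d) by lra. assert (Hv3 : Rabs (v - v0) < d) by lra. apply Rabs_def2 in Hu3. apply Rabs_def2 in Hv3.
  destruct Hu3 as [Hu1 Hu2]. destruct Hv3 as [Hv1 Hv2].
  assert (Hp' : u + v >= (u0 + v0) / 2) by lra.
  assert (E : u / (u + v) - u0 / (u0 + v0) = (u * v0 - u0 * v) / ((u + v) * (u0 + v0))) by (field; lra).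
  rewrite E. unfold Rdiv. rewrite Rabs_mult, Rabs_inv.
  assert (HD : (u + v) * (u0 + v0) > 0) by (apply Rmult_lt_0_compat; lra).
  rewrite (Rabs_pos_eq ((u + v) * (u0 + v0))) by lra.
  apply (Rmult_lt_reg_r ((u + v) * (u0 + v0))); [lra|].
  rewrite Rmult_assoc, Rinv_l, Rmult_1_r by lra.
  assert (N1 : (u - u0) * v0 <= d * v0) by (apply Rmult_le_compat_r; lra).
  assert (N2 : - d * v0 <= (u - u0) * v0) by (apply Rmult_le_compat_r; lra).
  assert (N3 : u0 * (v - v0) <= u0 * d) by (apply Rmult_le_compat_l; lra).
  assert (N4 : u0 * (- d) <= u0 * (v - v0)) by (apply Rmult_le_compat_l; lra).
  assert (N5 : d * (u0 + v0) <= eps * (u0 + v0) / 8 * (u0 + v0)) by (apply Rmult_le_compat_r; lra).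
  assert (N6 : eps * (u0 + v0) / 8 * (u0 + v0) < eps * (u + v) * (u0 + v0)).
  { assert (eps * (u0 + v0) / 8 < eps * (u + v)) by nra. apply Rmult_lt_compat_r; lra. }
  apply Rabs_def1; nra.
Qed.
Lemma list_margin {X : Type} (K : list X) (u : X -> R) (r : R) :
  (forall y, In y K -> u y < r) -> exists e, e > 0 /\ forall y, In y K -> u y + e <= r.
Proof.
  induction K as [|a K IH]; intro H.
  - exists 1. split; [lra| intros y []].
  - destruct IH as [e [He He']]. { intros y Hy; apply H; right; auto. }
    assert (Ha : u a < r) by (apply H; left; auto).
    exists (Rmin e (r - u a)). split. { apply Rmin_pos; lra. }
    intros y [E|Hy].
    + subst y. pose proof (Rmin_r e (r - u a)). lra.
    + pose proof (Rmin_l e (r - u a)). specialize (He' y Hy). lra.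
Qed.

Lemma ball_Cp_open {X : Type} (T : (X -> Prop) -> Prop) (g0 : CX T) (K : list X) (r : R) :
  Cp_open T (fun h : CX T => forall y, In y K -> Rabs (proj1_sig h y - proj1_sig g0 y) < r).
Proof.
  intros g Hg.
  destruct (list_margin K (fun y => Rabs (proj1_sig g y - proj1_sig g0 y)) r Hg) as [e [He He']].
  exists K, e. split; auto. intros h Hh y Hy.
  specialize (Hh y Hy). specialize (He' y Hy). simpl in He'.
  assert (Rabs (proj1_sig h y - proj1_sig g0 y) <= Rabs (proj1_sig h y - proj1_sig g y) + Rabs (proj1_sig g y - proj1_sig g0 y)).
  { replace (proj1_sig h y - proj1_sig g0 y) with ((proj1_sig h y - proj1_sig g y) + (proj1_sig g y - proj1_sig g0 y)) by ring. apply Rabs_triang. }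
  lra.
Qed.

Lemma ball_nbhd {X : Type} (T : (X -> Prop) -> Prop) (g0 : CX T) (K : list X) (r : R) :
  r > 0 -> nbhd (Cp_open T) g0 (fun h : CX T => forall y, In y K -> Rabs (proj1_sig h y - proj1_sig g0 y) < r).
Proof.
  intro Hr. exists (fun h : CX T => forall y, In y K -> Rabs (proj1_sig h y - proj1_sig g0 y) < r).
  split; [apply ball_Cp_open|split; [|auto]].
  intros y _. rewrite Rminus_diag, Rabs_R0. lra.
Qed.

Lemma inf_avoid {Y : Type} (A : Y -> Prop) (L : list Y) : infinite A -> exists a, A a /\ ~ In a L.
Proof.
  intro H. apply NNPP; intro H'. apply H. exists L. intros a Ha. apply NNPP; intro Hn. apply H'. exists a; auto.
Qed.

Lemma fiber_lists {Y Z : Type} (A : Y -> Prop) (phi : Y -> Z) (L : list Z) :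
 (forall z, In z L -> exists Lz, forall y, A y -> phi y = z -> In y Lz) ->
 exists M, forall y, A y -> In (phi y) L -> In y M.
Proof.
  induction L as [|z L IH]; intro H.
  - exists nil. intros y _ [].
  - destruct (H z (or_introl eq_refl)) as [Lz HLz].
    destruct IH as [M HM]. { intros z' Hz'; apply H; right; auto. }
    exists (Lz ++ M). intros y Hy [Hz|Hz]; apply in_or_app; [left; apply HLz; auto | right; apply HM; auto].
Qed.

Lemma pigeon {Y Z : Type} (A : Y -> Prop) (phi : Y -> Z) (L : list Z) :
  infinite A -> (forall y, A y -> In (phi y) L) -> exists z, In z L /\ infinite (fun y => A y /\ phi y = z).
Proof.
  intros HA HL. apply NNPP; intro H.
  assert (H0 : forall z, In z L -> exists Lz, forall y, A y -> phi y = z -> In y Lz).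
  { intros z Hz. apply NNPP; intro H2. apply H. exists z. split; auto. intros [Lz HLz]. apply H2. exists Lz.
    intros y Hy Hphi. apply HLz. auto. }
  destruct (fiber_lists A phi L H0) as [M HM]. apply HA. exists M. intros; apply HM; auto.
Qed.

Lemma lists_over {Y W : Type} (K : list Y) (P : Y -> W -> Prop) :
  (forall y, In y K -> exists Ly, forall w, P y w -> In w Ly) ->
  exists M, forall w y, In y K -> P y w -> In w M.
Proof.
  induction K as [|y K IH]; intro H.
  - exists nil. intros w y [].
  - destruct (H y (or_introl eq_refl)) as [Ly HLy].
    destruct IH as [M HM]. { intros y' Hy'; apply H; right; auto. }
    exists (Ly ++ M). intros w y' [E|Hy'] HP; apply in_or_app; [subst y'; left; auto | right; eapply HM; eauto].
Qed.

Lemma omega_avoid {X : Type} (T : (X -> Prop) -> Prop) (Vs : (X -> Prop) -> Prop) :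
  omega_cover T Vs -> forall (K : list X) (L : list (X -> Prop)),
  exists V, Vs V /\ ~ In V L /\ forall x, In x K -> V x.
Proof.
  intros [[_ Hnot] [_ Hom]] K L.
  assert (H : exists K', (forall x, In x K -> In x K') /\
     forall W, In W L -> Vs W -> exists x, In x K' /\ ~ W x).
  { induction L as [|W L IH].
    - exists K; split; auto. intros W [].
    - destruct IH as [K' [H1 H2]]. destruct (classic (Vs W)) as [HW|HW].
      + assert (Hx : exists x, ~ W x).
        { apply NNPP; intro H. apply Hnot. exists W; split; auto. intro x. apply NNPP; intro; apply H; eauto. }
        destruct Hx as [x0 Hx0]. exists (x0 :: K'). split. { intros; right; auto. }
        intros W' [E|HW'] HVs.
        * subst W'. exists x0; split; [left; auto | auto].
        * destruct (H2 W' HW' HVs) as [x [Hx Hx']]. exists x; split; [right; auto|auto].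
      + exists K'. split; auto. intros W' [E|HW'] HVs; [subst W'; contradiction | apply H2; auto]. }
  destruct H as [K' [H1 H2]]. destruct (Hom K') as [V [HV HVK]]. exists V. split; auto. split.
  - intro HL. destruct (H2 V HL HV) as [x [Hx Hx']]. apply Hx'. apply HVK; auto.
  - intros; apply HVK; auto.
Qed.

Lemma separate {X : Type} (T : (X -> Prop) -> Prop) (HT : is_topology T) (W V : X -> Prop) :
  zero_set T W -> cozero_set T V -> (forall x, W x -> V x) ->
  exists h : X -> R, continuous T h /\ (forall x, W x -> h x = 0) /\ (forall x, ~ V x -> h x = 1).
Proof.
  intros [z [Hz HzW]] [g [Hg HgV]] Hsub.
  assert (Hpos : forall x, Rabs (z x) + Rabs (g x) > 0).
  { intro x. pose proof (Rabs_pos (z x)). pose proof (Rabs_pos (g x)).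
    destruct (Req_dec (g x) 0) as [E|E].
    - assert (z x <> 0). { intro Ez. apply HzW in Ez. apply Hsub in Ez. apply HgV in Ez. auto. }
      pose proof (Rabs_pos_lt _ H1). lra.
    - pose proof (Rabs_pos_lt _ E). lra. }
  exists (fun x => Rabs (z x) / (Rabs (z x) + Rabs (g x))). split; [|split].
  - apply (cont_comp2 T HT z g (fun a b => Rabs a / (Rabs a + Rabs b))); auto.
    intros x eps He. apply div_ed; auto.
  - intros x Hx. apply HzW in Hx. rewrite Hx, Rabs_R0. unfold Rdiv. ring.
  - intros x Hx. assert (E : g x = 0). { apply NNPP; intro E. apply Hx. apply HgV. auto. }
    assert (z x <> 0). { intro Ez. apply HzW in Ez. apply Hx, Hsub, Ez. }
    pose proof (Rabs_pos_lt _ H). rewrite E, Rabs_R0. field. lra.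
Qed.

Lemma cozero_open {X : Type} (T : (X -> Prop) -> Prop) (V : X -> Prop) : cozero_set T V -> T V.
Proof.
  intros [g [Hg HgV]].
  replace V with (fun x => (fun t => t <> 0) (g x)).
  - apply (Hg (fun t => t <> 0)). intros y Hy. exists (Rabs y). split. { apply Rabs_pos_lt; auto. }
    intros z Hz Ez. subst z. rewrite Rminus_0_l, Rabs_Ropp in Hz. lra.
  - apply set_ext. intro x. simpl. rewrite HgV. tauto.
Qed.

Lemma dir12 {X : Type} (T : (X -> Prop) -> Prop) (HT : is_topology T) :
  (forall f : CX T, S1 (Gamma_at (Cp_open T) f) (Omega_at (Cp_open T) f)) ->
  S1 (GammaF T) (omega_cover T).
Proof.
  intros H1 Un HUn.
  set (zero := exist (fun f => continuous T f) (fun _ : X => 0) (cont_const T HT 0) : CX T).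
  assert (HnotX : forall n V, Un n V -> exists x, ~ V x).
  { intros n V HV. destruct (HUn n) as [[[_ Hn] _] _]. apply NNPP; intro H.
    apply Hn. exists V. split; auto. intro x. apply NNPP; intro; apply H; eauto. }
  assert (Hcoz : forall n V, Un n V -> cozero_set T V).
  { intros n V HV. destruct (HUn n) as [_ [Hc _]]. auto. }
  set (Fn := fun n => pick (fun V : X -> Prop => V) (fun F =>
     (forall V, Un n V -> zero_set T (F V) /\ forall x, F V x -> V x) /\
     gamma_cover (fun W => exists V, Un n V /\ W = F V))).
  assert (HFn : forall n, (forall V, Un n V -> zero_set T (Fn n V) /\ forall x, Fn n V x -> V x) /\
     gamma_cover (fun W => exists V, Un n V /\ W = Fn n V)).
  { intro n. unfold Fn. apply pick_spec. destruct (HUn n) as [_ [_ HF]]. exact HF. }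
  set (Fam := fun n W => exists V, Un n V /\ W = Fn n V).
  set (hsel := fun n (W : X -> Prop) => pick ((fun _ : X => True), zero)
     (fun p : (X -> Prop) * CX T => Un n (fst p) /\ W = Fn n (fst p) /\
        (forall x, W x -> proj1_sig (snd p) x = 0) /\ (forall x, ~ fst p x -> proj1_sig (snd p) x = 1))).
  assert (Hh : forall n W, Fam n W -> Un n (fst (hsel n W)) /\ W = Fn n (fst (hsel n W)) /\
        (forall x, W x -> proj1_sig (snd (hsel n W)) x = 0) /\
        (forall x, ~ fst (hsel n W) x -> proj1_sig (snd (hsel n W)) x = 1)).
  { intros n W HW. unfold hsel. apply pick_spec. destruct HW as [V [HV ->]].
    destruct (HFn n) as [HF _]. destruct (HF V HV) as [Hz Hsub].
    destruct (separate T HT (Fn n V) V Hz (Hcoz n V HV) Hsub) as [h [Hc [H0 H1']]].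
    exists (V, exist _ h Hc). simpl; auto. }
  assert (HFam : forall n, gamma_cover (Fam n)) by (intro n; apply (HFn n)).
  set (An := fun n a => exists W, Fam n W /\ a = snd (hsel n W)).
  assert (HA : forall n, Gamma_at (Cp_open T) zero (An n)).
  { intro n. destruct (HFam n) as [_ [Hinf Hgam]]. split; [|split].
    - intros [L HL].
      destruct (pigeon (Fam n) (fun W => snd (hsel n W)) L Hinf) as [a [Ha Hfib]].
      { intros W HW. apply HL. exists W; auto. }
      assert (Hz : forall x, proj1_sig a x = 0).
      { intro x. destruct (Hgam x) as [Lx HLx].
        destruct (inf_avoid _ Lx Hfib) as [W [[HW Ea] HWL]].
        assert (W x). { apply NNPP; intro Hn. apply HWL. apply HLx; auto. }
        rewrite <- Ea. apply (Hh n W HW); auto. }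
      destruct (inf_avoid _ nil Hfib) as [W0 [[HW0 Ea] _]].
      destruct (Hh n W0 HW0) as [HU0 [_ [_ H1']]].
      destruct (HnotX n _ HU0) as [x0 Hx0]. specialize (H1' x0 Hx0). rewrite Ea, Hz in H1'. lra.
    - intros [W [HW E]]. destruct (Hh n W HW) as [HU0 [_ [_ H1']]].
      destruct (HnotX n _ HU0) as [x0 Hx0]. specialize (H1' x0 Hx0). rewrite <- E in H1'.
      simpl in H1'. lra.
    - intros N [U [HU [HU0 HUN]]]. destruct (HU zero HU0) as [K [eps [He Hball]]].
      destruct (lists_over K (fun y W => Fam n W /\ ~ W y)) as [M HM].
      { intros y _. destruct (Hgam y) as [Ly HLy]. exists Ly. intros W [HW HWy]. auto. }
      exists (map (fun W => snd (hsel n W)) M). intros a [W [HW ->]] HnN.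
      apply (in_map (fun W => snd (hsel n W))).
      destruct (classic (exists y, In y K /\ ~ W y)) as [[y [Hy HWy]] | Hno].
      + eapply HM; eauto.
      + exfalso. apply HnN, HUN, Hball. intros y Hy.
        assert (W y). { apply NNPP; intro; apply Hno; eauto. }
        destruct (Hh n W HW) as [_ [_ [H0 _]]]. rewrite (H0 y H). simpl.
        rewrite Rminus_0_r, Rabs_R0. lra. }
  destruct (H1 zero An HA) as [b [Hb Hom]].
  set (Wsel := fun n => pick (fun _ : X => True) (fun W => Fam n W /\ b n = snd (hsel n W))).
  assert (HW : forall n, Fam n (Wsel n) /\ b n = snd (hsel n (Wsel n))).
  { intro n. unfold Wsel. apply pick_spec. destruct (Hb n) as [W [HW E]]. exists W; auto. }
  exists (fun n => fst (hsel n (Wsel n))). split.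
  { intro n. apply (Hh n _ (proj1 (HW n))). }
  assert (Key : forall K, exists V, (exists n, V = fst (hsel n (Wsel n))) /\ forall x, In x K -> V x).
  { intro K. destruct Hom as [Hcl _].
    destruct (Hcl _ (ball_nbhd T zero K 1 Rlt_0_1)) as [a [[m ->] Hba]].
    exists (fst (hsel m (Wsel m))). split; [eauto|]. intros x Hx. apply NNPP; intro Hn.
    destruct (HW m) as [HWm Eb]. destruct (Hh m _ HWm) as [_ [_ [_ H1']]].
    specialize (H1' x Hn). specialize (Hba x Hx). rewrite Eb, H1' in Hba. simpl in Hba.
    rewrite Rminus_0_r, Rabs_R1 in Hba. lra. }
  split; [split|split].
  - intro x. destruct (Key (x :: nil)) as [V [HV HVx]]. exists V. split; auto. apply HVx; left; auto.
  - intros [V [[m ->] Htot]]. destruct (HnotX m _ (proj1 (Hh m _ (proj1 (HW m))))) as [x Hx]. auto.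
  - intros V [m ->]. apply cozero_open. apply (Hcoz m). apply (Hh m _ (proj1 (HW m))).
  - exact Key.
Qed.

Definition cc (n : nat) : R := / (INR n + 1).
Lemma cc_pos n : cc n > 0.
Proof. unfold cc. apply Rinv_0_lt_compat. pose proof (pos_INR n); lra. Qed.
Lemma cc_mono m M : (M <= m)%nat -> cc m <= cc M.
Proof. intro H. unfold cc. apply Rinv_le_contravar; [pose proof (pos_INR M); lra|]. apply le_INR in H; lra. Qed.
Lemma cc_small eps : eps > 0 -> exists M, cc M < eps.
Proof.
  intro He. destruct (archimed_cor1 eps He) as [N [HN HN0]]. exists N. unfold cc.
  apply lt_0_INR in HN0. eapply Rlt_trans; [|exact HN].
  apply Rinv_lt_contravar; [apply Rmult_lt_0_compat|]; lra.
Qed.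

Lemma Rmax0_neq s : Rmax 0 s <> 0 <-> s > 0.
Proof. unfold Rmax; destruct (Rle_dec 0 s); split; intro; lra. Qed.
Lemma Rmax0_eq s : Rmax 0 s = 0 <-> s <= 0.
Proof. unfold Rmax; destruct (Rle_dec 0 s); split; intro; lra. Qed.

Lemma dir21 {X : Type} (T : (X -> Prop) -> Prop) (HT : is_topology T) :
  S1 (GammaF T) (omega_cover T) ->
  forall f : CX T, S1 (Gamma_at (Cp_open T) f) (Omega_at (Cp_open T) f).
Proof.
  intros H2 f An HAn.
  set (Ug := fun n (g : CX T) => fun x => Rabs (proj1_sig g x - proj1_sig f x) < cc n).
  set (P := fun n => exists g, An n g /\ forall x, Ug n g x).
  assert (HL : forall n x r, r > 0 -> exists L, forall a, An n a ->
      ~ Rabs (proj1_sig a x - proj1_sig f x) < r -> In a L).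
  { intros n x r Hr. destruct (HAn n) as [_ [_ Hg]].
    destruct (Hg _ (ball_nbhd T f (x :: nil) r Hr)) as [L HL]. exists L.
    intros a Ha Hn. apply HL; auto. intro H; apply Hn; apply H; left; auto. }
  assert (Hne : forall n, exists g, An n g).
  { intro n. destruct (inf_avoid _ nil (proj1 (HAn n))) as [g [Hg _]]. eauto. }
  assert (Hnf : forall n, ~ An n f) by (intro n; apply (HAn n)).
  assert (Goal : forall b : nat -> CX T, (forall n, An n (b n)) ->
     (forall K eps, eps > 0 -> exists n, forall y, In y K -> Rabs (proj1_sig (b n) y - proj1_sig f y) < eps) ->
     exists b, (forall n, An n (b n)) /\ Omega_at (Cp_open T) f (fun e => exists n, e = b n)).
  { intros b Hb Hcl. exists b. split; auto. split.
    - intros N [U [HU [HUf HUN]]]. destruct (HU f HUf) as [K [eps [He Hball]]].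
      destruct (Hcl K eps He) as [n Hn]. exists (b n). split; eauto.
    - intros [n E]. apply (Hnf n). rewrite E. auto. }
  destruct (classic (forall M, exists n, (M <= n)%nat /\ P n)) as [HA | HB].
  -
    set (b := fun n => pick f (fun g => An n g /\ (P n -> forall x, Ug n g x))).
    assert (Hb : forall n, An n (b n) /\ (P n -> forall x, Ug n (b n) x)).
    { intro n. unfold b. apply pick_spec. destruct (classic (P n)) as [Hp|Hp].
      - destruct Hp as [g [Hg Hu]]. exists g; auto.
      - destruct (Hne n) as [g Hg]. exists g. split; auto. intro; contradiction. }
    apply (Goal b); [intro n; apply Hb|].
    intros K eps He. destruct (cc_small eps He) as [M HM]. destruct (HA M) as [n [Hn Hp]].
    exists n. intros y _. pose proof ((proj2 (Hb n)) Hp y) as H. unfold Ug in H.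
    pose proof (cc_mono n M Hn). lra.
  -
    destruct (not_all_ex_not _ _ HB) as [N0 HN0].
    assert (Hnp : forall n, (N0 <= n)%nat -> ~ P n).
    { intros n Hn Hp. apply HN0. eauto. }
    set (Un := fun m V => exists g, An (m + N0)%nat g /\ V = Ug (m + N0)%nat g).
    assert (HG : forall m, GammaF T (Un m)).
    { intro m. set (n := (m + N0)%nat). assert (Hp : ~ P n) by (apply Hnp; unfold n; lia).
      pose proof (cc_pos n) as Hc.
      assert (Hgc : gamma_cover (Un m)).
      { split; [split|split].
        - intro x. destruct (HL n x (cc n) Hc) as [L HLx].
          destruct (inf_avoid _ L (proj1 (HAn n))) as [g [Hg HgL]].
          exists (Ug n g). split; [exists g; auto|]. apply NNPP; intro Hn. apply HgL, HLx; auto.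
        - intros [V [[g [Hg ->]] Htot]]. apply Hp. exists g; auto.
        - intros [L HL'].
          destruct (pigeon (An n) (Ug n) L (proj1 (HAn n))) as [S [HS Hfib]].
          { intros g Hg. apply HL'. exists g; auto. }
          assert (HSt : forall x, S x).
          { intro x. destruct (HL n x (cc n) Hc) as [Lx HLx].
            destruct (inf_avoid _ Lx Hfib) as [g [[Hg <-] HgL]].
            apply NNPP; intro Hn. apply HgL, HLx; auto. }
          destruct (inf_avoid _ nil Hfib) as [g0 [[Hg0 E] _]]. apply Hp. exists g0. split; auto.
          rewrite E; auto.
        - intro x. destruct (HL n x (cc n) Hc) as [Lx HLx]. exists (map (Ug n) Lx).
          intros V [g [Hg ->]] Hn. apply in_map. apply HLx; auto. }
      split; [exact Hgc|split].
      - intros V [g [Hg ->]].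
        exists (fun x => Rmax 0 (cc n - Rabs (proj1_sig g x - proj1_sig f x))). split.
        + apply (cont_lip T HT (proj1_sig g) (proj1_sig f) (fun a b => Rmax 0 (cc n - Rabs (a - b))));
            [apply proj2_sig | apply proj2_sig | apply lip1].
        + intro x. rewrite Rmax0_neq. unfold Ug. fold n. lra.
      - set (gsel := fun V => pick f (fun g => An n g /\ V = Ug n g)).
        assert (Hgs : forall V, Un m V -> An n (gsel V) /\ V = Ug n (gsel V)).
        { intros V HV. unfold gsel. apply pick_spec. exact HV. }
        set (Fg := fun (g : CX T) x => Rabs (proj1_sig g x - proj1_sig f x) <= cc n / 2).
        assert (HFsub : forall V, Un m V -> forall x, Fg (gsel V) x -> V x).
        { intros V HV x Hx. rewrite (proj2 (Hgs V HV)). unfold Ug, Fg in *. lra. }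
        destruct Hgc as [[_ Hnt] [Hinf _]].
        assert (Hc2 : cc n / 2 > 0) by lra.
        exists (fun V => Fg (gsel V)). split.
        + intros V HV. split; [|apply HFsub; auto].
          exists (fun x => Rmax 0 (Rabs (proj1_sig (gsel V) x - proj1_sig f x) - cc n / 2)). split.
          * apply (cont_lip T HT (proj1_sig (gsel V)) (proj1_sig f) (fun a b => Rmax 0 (Rabs (a - b) - cc n / 2)));
              [apply proj2_sig | apply proj2_sig | apply lip2].
          * intro x. rewrite Rmax0_eq. unfold Fg. lra.
        + split; [split|split].
          * intro x. destruct (HL n x (cc n / 2) Hc2) as [L' HL'].
            destruct (inf_avoid _ (map (Ug n) L') Hinf) as [V [HV HVL]].
            exists (Fg (gsel V)). split; [exists V; auto|]. apply NNPP; intro Hn. apply HVL.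
            rewrite (proj2 (Hgs V HV)). apply in_map. apply HL'; [apply Hgs; auto|]. unfold Fg in Hn. lra.
          * intros [W [[V [HV ->]] Htot]]. apply Hnt. exists V. split; auto. intro x. apply HFsub; auto.
          * intros [L HLL].
            destruct (pigeon (Un m) (fun V => Fg (gsel V)) L Hinf) as [S [HS Hfib]].
            { intros V HV. apply HLL. exists V; auto. }
            assert (HSt : forall x, S x).
            { intro x. destruct (HL n x (cc n / 2) Hc2) as [L' HL'].
              destruct (inf_avoid _ (map (Ug n) L') Hfib) as [V [[HV <-] HVL]].
              apply NNPP; intro Hn. apply HVL.
              rewrite (proj2 (Hgs V HV)). apply in_map. apply HL'; [apply Hgs; auto|]. unfold Fg in Hn. lra. }
            destruct (inf_avoid _ nil Hfib) as [V0 [[HV0 E] _]]. apply Hnt. exists V0. split; auto.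
            intro x. apply HFsub; auto. rewrite E. auto.
          * intro x. destruct (HL n x (cc n / 2) Hc2) as [L' HL']. exists (map Fg L').
            intros W [V [HV ->]] Hn. apply in_map. apply HL'; [apply Hgs; auto|]. unfold Fg in Hn. lra. }
    destruct (H2 Un HG) as [Vsel [HVsel Hom]].
    set (b := fun n => pick f (fun g => An n g /\ ((N0 <= n)%nat -> Vsel (n - N0)%nat = Ug n g))).
    assert (Hb : forall n, An n (b n) /\ ((N0 <= n)%nat -> Vsel (n - N0)%nat = Ug n (b n))).
    { intro n. unfold b. apply pick_spec. destruct (Compare_dec.le_lt_dec N0 n) as [Hn|Hn].
      - destruct (HVsel (n - N0)%nat) as [g [Hg E]].
        replace (n - N0 + N0)%nat with n in * by lia. exists g. auto.
      - destruct (Hne n) as [g Hg]. exists g. split; auto. intro; lia. }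
    apply (Goal b); [intro n; apply Hb|].
    intros K eps He. destruct (cc_small eps He) as [M HM].
    destruct (omega_avoid T _ Hom K (map Vsel (seq 0 M))) as [V [[m ->] [HVL HVK]]].
    assert (Hm : (M <= m)%nat).
    { destruct (Compare_dec.le_lt_dec M m) as [H|H]; auto. exfalso. apply HVL. apply in_map. apply in_seq. lia. }
    exists (m + N0)%nat. intros y Hy.
    destruct (Hb (m + N0)%nat) as [_ E]. specialize (E ltac:(lia)).
    replace (m + N0 - N0)%nat with m in E by lia.
    specialize (HVK y Hy). rewrite E in HVK. unfold Ug in HVK.
    pose proof (cc_mono (m + N0) M ltac:(lia)). lra.
Qed.

Theorem mainTheorem5 (X : Type) (T : (X -> Prop) -> Prop)
  (HT : is_topology T) (HX : tychonoff T) :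
  (forall f : CX T, S1 (Gamma_at (Cp_open T) f) (Omega_at (Cp_open T) f)) <->
  S1 (GammaF T) (omega_cover T).
Proof.
  split; [apply dir12; auto | apply dir21; auto].
Qed.
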